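(* Let $S=\{1,\dots,n\}$, $C=\{1,\dots,m\}$, bandwidths $\mathcal{U}=(U_s)_{s\in S}$ with $U_s>0$, memory sizes $\mathcal{D}=(d_s)_{s\in S}$ with integers $d_s\ge1$, and popularities $\Lambda=(\lambda_c)_{c\in C}$ with $\lambda_c\ge 0$. Let $\mathtt{JAM}^*(\mathcal{U},\Lambda,\mathcal{D})$ denote the optimal value of \[ \max_{Z=(z_{sc})}\ \sum_{s\in S}\sum_{c\in C} z_{sc}\ \text{ s.t. } \sum_{c}z_{sc}\le U_s\ \forall s,\ \sum_{s}z_{sc}\le\lambda_c\ \forall c,\ \sum_{c}\mathbb{1}(z_{sc}>0)\le d_s\ \forall s,\ z_{sc}\ge 0. \] Consider the following \texttt{greedy} algorithm. Initialize $\mathsf{flow}(s)=U_s$, $\mathsf{deg}(s)=d_s$ for all $s\in S$, $\mathsf{flow}(c)=\lambda_c$ for all $c\in C$, and $z_{sc}=0$, $a_{sc}=0$ for all $(s,c)$. While there exists $(s,c)\in S\times C$ with $\mathsf{flow}(s)\,\mathsf{deg}(s)\,\mathsf{flow}(c)>0$: choose $s^*\in\arg\max_{s\in S:\mathsf{deg}(s)>0}\mathsf{flow}(s)$ and $c^*\in\arg\max_{c\in C}\mathsf{flow}(c)$ (ties broken arbitrarily), set $f=\min(\mathsf{flow}(s^* ),\mathsf{flow}(c^* ))$, decrease $\mathsf{flow}(s^* )$ and $\mathsf{flow}(c^* )$ by $f$, decrease $\mathsf{deg}(s^* )$ by $1$, and set $a_{s^*c^*}=1$, $z_{s^*c^*}=f$.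 The output value of the algorithm is the total matched flow $\sum_{s,c}z_{sc}$ (the sum of the values $f$ over all iterations). Then the output value of \texttt{greedy} on this instance is at least $\frac{1}{2}\mathtt{JAM}^*(\mathcal{U},\Lambda,\mathcal{D})$.
   Context: $\mathbb{1}(\cdot)$ denotes the indicator function. *)

(* Defs.v *)
From HB Require Import structures.
From mathcomp Require Import all_boot all_order all_algebra.
Set Implicit Arguments. Unset Strict Implicit. Unset Printing Implicit Defensive.
Import Order.TTheory GRing.Theory Num.Theory.
Local Open Scope ring_scope.

Section JAM.
Variables (R : realFieldType) (n m : nat).

Definition jam_feasible (U : 'I_n -> R) (lam : 'I_m -> R) (d : 'I_n -> nat)
    (z : 'I_n -> 'I_m -> R) : Prop :=
  (forall s c, 0 <= z s c) /\
  (forall s, \sum_(c < m) z s c <= U s) /\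
  (forall c, \sum_(s < n) z s c <= lam c) /\
  (forall s, (#|[set c : 'I_m | (0 < z s c)%R]| <= d s)%N).

Definition jam_value (z : 'I_n -> 'I_m -> R) : R := \sum_(s < n) \sum_(c < m) z s c.

Record gstate := GState {
  flowS : 'I_n -> R;
  degS  : 'I_n -> nat;
  flowC : 'I_m -> R;
  zz    : 'I_n -> 'I_m -> R }.

Definition ginit (U : 'I_n -> R) (lam : 'I_m -> R) (d : 'I_n -> nat) : gstate :=
  GState U d lam (fun _ _ => 0).

Definition gactive (st : gstate) : Prop :=
  exists s c, 0 < flowS st s * (degS st s)%:R * flowC st c.

Definition gstep (st st' : gstate) : Prop :=
  gactive st /\
  exists (s : 'I_n) (c : 'I_m),
    (0 < degS st s)%N /\
    (forall s', (0 < degS st s')%N -> flowS st s' <= flowS st s) /\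
    (forall c', flowC st c' <= flowC st c) /\
    let f := Num.min (flowS st s) (flowC st c) in
    st' = GState
      (fun s' => if s' == s then flowS st s' - f else flowS st s')
      (fun s' => if s' == s then (degS st s').-1 else degS st s')
      (fun c' => if c' == c then flowC st c' - f else flowC st c')
      (fun s' c' => if (s' == s) && (c' == c) then f else zz st s' c').

Inductive greach (st0 : gstate) : gstate -> Prop :=
  | greach_refl : greach st0 st0
  | greach_step st st' : greach st0 st -> gstep st st' -> greach st0 st'.

End JAM.

(* Main.v *)
Require Import Defs.
From HB Require Import structures.
From mathcomp Require Import all_boot all_order all_algebra.
From mathcomp Require Import ring lra zify.
Import Order.TTheory GRing.Theory Num.Theory.
Local Open Scope ring_scope.

Lemma sum_set (R : realFieldType) (I : finType) (g : I -> R) (i0 : I) (v : R) :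
  \sum_i (if i == i0 then v else g i) = \sum_i g i + (v - g i0).
Proof.
rewrite (bigD1 i0) //= eqxx [in RHS](bigD1 i0) //=.
have -> : \sum_(i | i != i0) (if i == i0 then v else g i) = \sum_(i | i != i0) g i.
  by apply: eq_bigr => i /negbTE ->.
lra.
Qed.

Lemma sum_upd (R : realFieldType) (I : finType) (g : I -> R) (i0 : I) (f : R) :
  \sum_i (if i == i0 then g i - f else g i) = \sum_i g i - f.
Proof.
have -> : \sum_i (if i == i0 then g i - f else g i)
        = \sum_i (if i == i0 then g i0 - f else g i).
  by apply: eq_bigr => i _; case: eqP => [->|].
rewrite sum_set; lra.
Qed.

Definition inv {R : realFieldType} {n m : nat} (U : 'I_n -> R) (d : 'I_n -> nat)
  (lam : 'I_m -> R) (st : gstate R n m) : Prop :=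
 (forall s, 0 <= flowS st s <= U s) /\ (forall s, (degS st s <= d s)%N) /\
 (forall c, 0 <= flowC st c <= lam c) /\
 (forall s, flowS st s = 0 \/
     forall c, (d s - degS st s)%:R * flowC st c <= U s - flowS st s) /\
 (forall s c, 0 < flowS st s -> 0 < flowC st c -> zz st s c = 0) /\
 jam_value (zz st) = \sum_s (U s - flowS st s) /\
 jam_value (zz st) = \sum_c (lam c - flowC st c).

Lemma inv_init (R : realFieldType) (n m : nat) (U : 'I_n -> R) (d : 'I_n -> nat)
  (lam : 'I_m -> R) (hU : forall s, 0 < U s) (hlam : forall c, 0 <= lam c) :
  inv U d lam (ginit U lam d).
Proof.
rewrite /inv /ginit /=.
split; first by move=> s; rewrite lexx ltW.
split; first by [].
split; first by move=> c; rewrite lexx hlam.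
split; first by move=> s; right => c; rewrite subnn mul0r subrr.
split; first by [].
rewrite /jam_value big1 => [|s _]; last by rewrite big1.
split; symmetry; apply: big1 => i _; apply: subrr.
Qed.

Lemma step_inv (R : realFieldType) (n m : nat) (U : 'I_n -> R) (d : 'I_n -> nat)
  (lam : 'I_m -> R) st st' :
  inv U d lam st -> gstep st st' -> inv U d lam st'.
Proof.
move=> [hS [hD [hC [hP [hZ [hJS hJC]]]]]] [[sa [ca hact]] [s0 [c0 [hdeg [hmaxS [hmaxC E]]]]]].
simpl in E; subst st'.
set f := Num.min (flowS st s0) (flowC st c0).
have fSa : 0 < flowS st sa.
  have /andP[h0 _] := hS sa; rewrite lt0r h0 andbT; apply/eqP => e.
  by rewrite e !mul0r ltxx in hact.
have dSa : (0 < degS st sa)%N.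
  rewrite lt0n; apply/eqP => e; by rewrite e mulr0 mul0r ltxx in hact.
have fCa : 0 < flowC st ca.
  have /andP[h0 _] := hC ca; rewrite lt0r h0 andbT; apply/eqP => e.
  by rewrite e mulr0 ltxx in hact.
have fS0 : 0 < flowS st s0 := lt_le_trans fSa (hmaxS sa dSa).
have fC0 : 0 < flowC st c0 := lt_le_trans fCa (hmaxC ca).
have hf0 : 0 <= f by rewrite /f le_min (ltW fS0) (ltW fC0).
have hfS : f <= flowS st s0 by rewrite /f ge_min lexx.
have hfC : f <= flowC st c0 by rewrite /f ge_min lexx orbT.
have hfcase : f = flowS st s0 \/ (f = flowC st c0 /\ flowC st c0 < flowS st s0).
  rewrite /f; case: (leP (flowS st s0) (flowC st c0)) => h.
    by left.
  by right.
have hz0 : zz st s0 c0 = 0 := hZ s0 c0 fS0 fC0.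
rewrite /inv /=.
split.
  move=> s; case: eqP => [->|_]; last exact: hS.
  have /andP[h1 h2] := hS s0; apply/andP; split; lra.
split.
  move=> s; case: eqP => _; last exact: hD.
  exact: leq_trans (leq_pred _) (hD _).
split.
  move=> c; case: eqP => [->|_]; last exact: hC.
  have /andP[h1 h2] := hC c0; apply/andP; split; lra.
split.
  move=> s; case: (s =P s0) => [->|ns].
    rewrite ?eqxx.
    case: hfcase => [ef|[ef lt]]; first by left; rewrite ef subrr.
    right; case: (hP s0) => [e|hP0]; first by rewrite e in fS0; rewrite ltxx in fS0.
    move=> c.
    have hDs := hD s0.
    have -> : (d s0 - (degS st s0).-1 = (d s0 - degS st s0).+1)%N by lia.
    rewrite -addn1 natrD mulrDl mul1r.
    set K := (d s0 - degS st s0)%:R.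
    have hK : 0 <= K :> R by rewrite ler0n.
    set x := (if c == c0 then flowC st c - f else flowC st c).
    have hxle : x <= flowC st c by rewrite /x; case: eqP => _; lra.
    have hxc0 : x <= flowC st c0 := le_trans hxle (hmaxC c).
    have h1 : K * x <= K * flowC st c by apply: ler_wpM2l.
    have h2 := hP0 c.
    rewrite -/K in h2.
    lra.
  have ns' : (s == s0) = false by apply/eqP.
  rewrite ?ns'.
  case: (hP s) => [e|h]; [by left|right].
  move=> c; apply: le_trans (h c); apply: ler_wpM2l; first by rewrite ler0n.
  case: eqP => _; lra.
split.
  move=> s c.
  case: (boolP ((s == s0) && (c == c0))) => [/andP[/eqP es /eqP ec]|hn].
    rewrite es ec !eqxx => h1 h2; case: hfcase => [ef|[ef _]]; lra.
  move=> h1 h2; apply: hZ; [move: h1|move: h2]; case: eqP => _ h; lra.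
have eS : \sum_s (U s - (if s == s0 then flowS st s - f else flowS st s))
          = \sum_s (U s - flowS st s) + f.
  rewrite !sumrB sum_upd; lra.
have eC : \sum_c (lam c - (if c == c0 then flowC st c - f else flowC st c))
          = \sum_c (lam c - flowC st c) + f.
  rewrite !sumrB sum_upd; lra.
have eJ : jam_value (fun s c => if (s == s0) && (c == c0) then f else zz st s c)
          = jam_value (zz st) + f.
  rewrite /jam_value.
  have -> : \sum_s \sum_c (if (s == s0) && (c == c0) then f else zz st s c)
     = \sum_s (if s == s0 then \sum_c (if c == c0 then f else zz st s0 c)
               else \sum_c zz st s c).
    by apply: eq_bigr => s _; case: eqP => [->|].
  rewrite !sum_set hz0; lra.
rewrite eS eC eJ; split; [rewrite hJS|rewrite hJC]; lra.
Qed.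

Theorem theorem2 (R : realFieldType) (n m : nat)
    (U : 'I_n -> R) (d : 'I_n -> nat) (lam : 'I_m -> R)
    (hU : forall s, 0 < U s) (hd : forall s, (1 <= d s)%N)
    (hlam : forall c, 0 <= lam c)
    (final : gstate R n m)
    (hrun : greach (ginit U lam d) final) (hstop : ~ gactive final)
    (z : 'I_n -> 'I_m -> R) (hz : jam_feasible U lam d z) :
  jam_value z / 2 <= jam_value (zz final).
Proof.
have hI : inv U d lam final.
  elim: hrun => [|st st' _ IH hs]; first exact: inv_init.
  exact: step_inv IH hs.
move: hI => [hS [hD [hC [hP [_ [hJS hJC]]]]]].
move: hz => [hz0 [hzU [hzl hzd]]].
set F := flowC final.
have hfin : forall s c, flowS final s * (degS final s)%:R * F c <= 0.
  move=> s c; rewrite leNgt; apply/negP => h; apply: hstop; by exists s, c.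
have key : forall s, \sum_c Num.min (z s c) (F c) <= U s - flowS final s.
  move=> s.
  have /andP[hs0 hsU] := hS s.
  have [e|ne] := eqVneq (flowS final s) 0.
    rewrite e subr0; apply: le_trans (hzU s).
    by apply: ler_sum => c _; rewrite ge_min lexx.
  have fpos : 0 < flowS final s by rewrite lt0r ne hs0.
  have hPs : forall c, (d s - degS final s)%:R * F c <= U s - flowS final s.
    by case: (hP s) => [e|//]; rewrite e eqxx in ne.
  have hb : forall c, (d s)%:R * F c <= U s - flowS final s.
    move=> c.
    have [dz|dpos] := eqVneq (degS final s) 0%N.
      by have := hPs c; rewrite dz subn0.
    have hFc : F c <= 0.
      have h := hfin s c.
      rewrite pmulr_rle0 // in h.
      by apply: mulr_gt0 => //; rewrite ltr0n lt0n.
    have /andP[hF0 _] := hC c.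
    have -> : F c = 0 by apply/eqP; rewrite eq_le hFc hF0.
    by rewrite mulr0 subr_ge0.
  set K := U s - flowS final s.
  have hK : 0 <= K by rewrite /K subr_ge0.
  apply: (@le_trans _ _ (\sum_(c | 0 < z s c) F c)).
    rewrite [X in _ <= X]big_mkcond /=; apply: ler_sum => c _.
    case: ifP => h; first by rewrite ge_min lexx orbT.
    rewrite ge_min; apply/orP; left.
    by rewrite leNgt h.
  have dpos : (0 : R) < (d s)%:R by rewrite ltr0n hd.
  rewrite -(ler_pM2l dpos) mulr_sumr.
  apply: (@le_trans _ _ (\sum_(c | 0 < z s c) K)); first by apply: ler_sum => c _.
  rewrite sumr_const -[K *+ _]mulr_natl; apply: (ler_wpM2r hK).
  rewrite ler_nat; apply: leq_trans (hzd s).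
  by rewrite cardsE.
have cpart : forall c, \sum_s (z s c - Num.min (z s c) (F c)) <= lam c - F c.
  move=> c.
  have /andP[hF0 hFl] := hC c.
  rewrite -/F in hF0 hFl.
  case: (pickP (fun s => F c < z s c)) => [s0 hs0|hno].
    rewrite (bigD1 s0) //= (min_r (ltW hs0)).
    have h1 : \sum_(s | s != s0) (z s c - Num.min (z s c) (F c))
              <= \sum_(s | s != s0) z s c.
      apply: ler_sum => s _.
      have : 0 <= Num.min (z s c) (F c) by rewrite le_min hz0 hF0.
      lra.
    have hsum := hzl c; rewrite (bigD1 s0) //= in hsum.
    lra.
  rewrite big1 => [|s _]; first lra.
  by rewrite min_l ?subrr // leNgt hno.
have split_eq : jam_value z = \sum_s \sum_c Num.min (z s c) (F c)
    + \sum_c \sum_s (z s c - Num.min (z s c) (F c)).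
  rewrite [X in _ + X]exchange_big -big_split; apply: eq_bigr => s _.
  rewrite -big_split; apply: eq_bigr => c _ /=.
  by rewrite addrC subrK.
have h1 : \sum_s \sum_c Num.min (z s c) (F c) <= jam_value (zz final).
  by rewrite hJS; apply: ler_sum => s _; apply: key.
have h2 : \sum_c \sum_s (z s c - Num.min (z s c) (F c)) <= jam_value (zz final).
  by rewrite hJC; apply: ler_sum => c _; apply: cpart.
rewrite split_eq; lra.
Qed.
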